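(* (Absolute concentration robustness of OmpR-P.) For the EnvZ/OmpR network described in the context and any positive values of $k_1,\dots,k_{15}$, at every steady state with $[\mathrm{EnvZ\text{-}ATP}]\neq0$ (in particular at every positive steady state) one has \[[\mathrm{OmpR\text{-}P}]=\frac{k_1k_3k_5(k_{11}+k_{12})(k_{14}+k_{15})}{k_1k_3k_{10}k_{12}(k_{14}+k_{15})+k_2k_{13}k_{15}(k_4+k_5)(k_{11}+k_{12})}.\] In particular this value depends only on the rate constants and not on the initial conditions or total amounts of EnvZ and OmpR.
   Context: The EnvZ/OmpR network has mass-action kinetics and reactions $\mathrm{EnvZ\text{-}ADP}\underset{k_2}{\overset{k_1}{\rightleftharpoons}}\mathrm{EnvZ}\underset{k_4}{\overset{k_3}{\rightleftharpoons}}\mathrm{EnvZ\text{-}ATP}\xrightarrow{k_5}\mathrm{EnvZ\text{-}P}$; $\mathrm{EnvZ\text{-}P}+\mathrm{OmpR}\underset{k_7}{\overset{k_6}{\rightleftharpoons}}\mathrm{EnvZ\text{-}P\text{-}OmpR}\underset{k_9}{\overset{k_8}{\rightleftharpoons}}\mathrm{EnvZ}+\mathrm{OmpR\text{-}P}$; $\mathrm{EnvZ\text{-}ATP}+\mathrm{OmpR\text{-}P}\underset{k_{11}}{\overset{k_{10}}{\rightleftharpoons}}\mathrm{EnvZ\text{-}ATP\text{-}OmpR\text{-}P}\xrightarrow{k_{12}}\mathrm{EnvZ\text{-}ATP}+\mathrm{OmpR}$; $\mathrm{EnvZ\text{-}ADP}+\mathrm{OmpR\text{-}P}\underset{k_{14}}{\overset{k_{13}}{\rightleftharpoons}}\mathrm{EnvZ\text{-}ADP\text{-}OmpR\text{-}P}\xrightarrow{k_{15}}\mathrm{EnvZ\text{-}ADP}+\mathrm{OmpR}$.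 Here each name denotes a chemical species (hyphenated names are single species, i.e. bound forms), square brackets denote concentrations, and a steady state is a nonnegative concentration vector at which all mass-action rates of change vanish. *)

(* Defs.v *)
From Stdlib Require Import Reals.
Open Scope R_scope.

Record conc := mkConc {
  XD : R;    (* [EnvZ-ADP] *)
  X : R;     (* [EnvZ] *)
  XT : R;    (* [EnvZ-ATP] *)
  XP : R;    (* [EnvZ-P] *)
  Y : R;     (* [OmpR] *)
  XPY : R;   (* [EnvZ-P-OmpR] *)
  YP : R;    (* [OmpR-P] *)
  XTYP : R;  (* [EnvZ-ATP-OmpR-P] *)
  XDYP : R   (* [EnvZ-ADP-OmpR-P] *)
}.

(* Rate constants k_1..k_15, indexed by nat (k 1, ..., k 15). *)
Definition rates := nat -> R.

Section Fluxes.
Variables (k : rates) (c : conc).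
Definition r1  := k 1%nat * XD c.            (* EnvZ-ADP -> EnvZ *)
Definition r2  := k 2%nat * X c.             (* EnvZ -> EnvZ-ADP *)
Definition r3  := k 3%nat * X c.             (* EnvZ -> EnvZ-ATP *)
Definition r4  := k 4%nat * XT c.            (* EnvZ-ATP -> EnvZ *)
Definition r5  := k 5%nat * XT c.            (* EnvZ-ATP -> EnvZ-P *)
Definition r6  := k 6%nat * XP c * Y c.      (* EnvZ-P + OmpR -> EnvZ-P-OmpR *)
Definition r7  := k 7%nat * XPY c.           (* reverse *)
Definition r8  := k 8%nat * XPY c.           (* EnvZ-P-OmpR -> EnvZ + OmpR-P *)
Definition r9  := k 9%nat * X c * YP c.      (* reverse *)
Definition r10 := k 10%nat * XT c * YP c.    (* EnvZ-ATP + OmpR-P -> EnvZ-ATP-OmpR-P *)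
Definition r11 := k 11%nat * XTYP c.         (* reverse *)
Definition r12 := k 12%nat * XTYP c.         (* EnvZ-ATP-OmpR-P -> EnvZ-ATP + OmpR *)
Definition r13 := k 13%nat * XD c * YP c.    (* EnvZ-ADP + OmpR-P -> EnvZ-ADP-OmpR-P *)
Definition r14 := k 14%nat * XDYP c.         (* reverse *)
Definition r15 := k 15%nat * XDYP c.         (* EnvZ-ADP-OmpR-P -> EnvZ-ADP + OmpR *)
End Fluxes.

Definition dXD k c   := r2 k c - r1 k c - r13 k c + r14 k c + r15 k c.
Definition dX k c    := r1 k c - r2 k c - r3 k c + r4 k c + r8 k c - r9 k c.
Definition dXT k c   := r3 k c - r4 k c - r5 k c - r10 k c + r11 k c + r12 k c.
Definition dXP k c   := r5 k c - r6 k c + r7 k c.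
Definition dY k c    := - r6 k c + r7 k c + r12 k c + r15 k c.
Definition dXPY k c  := r6 k c - r7 k c - r8 k c + r9 k c.
Definition dYP k c   := r8 k c - r9 k c - r10 k c + r11 k c - r13 k c + r14 k c.
Definition dXTYP k c := r10 k c - r11 k c - r12 k c.
Definition dXDYP k c := r13 k c - r14 k c - r15 k c.

Definition nonneg (c : conc) : Prop :=
  0 <= XD c /\ 0 <= X c /\ 0 <= XT c /\ 0 <= XP c /\ 0 <= Y c /\
  0 <= XPY c /\ 0 <= YP c /\ 0 <= XTYP c /\ 0 <= XDYP c.

Definition steady_state (k : rates) (c : conc) : Prop :=
  nonneg c /\
  dXD k c = 0 /\ dX k c = 0 /\ dXT k c = 0 /\ dXP k c = 0 /\ dY k c = 0 /\
  dXPY k c = 0 /\ dYP k c = 0 /\ dXTYP k c = 0 /\ dXDYP k c = 0.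

(* Main.v *)
Require Import Defs.
From Stdlib Require Import Reals Lra Lia.
Open Scope R_scope.

Theorem mainTheorem6 (k : rates) (c : conc) :
  (forall i : nat, (1 <= i <= 15)%nat -> 0 < k i) ->
  steady_state k c ->
  XT c <> 0 ->
  YP c =
    (k 1%nat * k 3%nat * k 5%nat * (k 11%nat + k 12%nat) * (k 14%nat + k 15%nat)) /
    (k 1%nat * k 3%nat * k 10%nat * k 12%nat * (k 14%nat + k 15%nat)
     + k 2%nat * k 13%nat * k 15%nat * (k 4%nat + k 5%nat) * (k 11%nat + k 12%nat)).
Proof.
  intros Hk [_ [eD [_ [eT [eP [eY [_ [_ [e8 e9]]]]]]]]] HT.
  assert (K1 := Hk 1%nat ltac:(lia)). assert (K2 := Hk 2%nat ltac:(lia)).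
  assert (K3 := Hk 3%nat ltac:(lia)). assert (K4 := Hk 4%nat ltac:(lia)).
  assert (K5 := Hk 5%nat ltac:(lia)). assert (K10 := Hk 10%nat ltac:(lia)).
  assert (K11 := Hk 11%nat ltac:(lia)). assert (K12 := Hk 12%nat ltac:(lia)).
  assert (K13 := Hk 13%nat ltac:(lia)). assert (K14 := Hk 14%nat ltac:(lia)).
  assert (K15 := Hk 15%nat ltac:(lia)).
  set (a := k 11%nat + k 12%nat). set (b := k 14%nat + k 15%nat).
  set (Den := k 1%nat * k 3%nat * k 10%nat * k 12%nat * b
     + k 2%nat * k 13%nat * k 15%nat * (k 4%nat + k 5%nat) * a).
  set (N := k 1%nat * k 3%nat * k 5%nat * a * b).
  assert (Hid : XT c * YP c * Den - XT c * N =
    - (k 1%nat * k 3%nat * a * b) * (dXP k c - dY k c)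
    - k 15%nat * k 13%nat * k 2%nat * a * YP c * (dXTYP k c + dXT k c)
    + k 15%nat * k 13%nat * k 3%nat * a * YP c * (dXDYP k c + dXD k c)
    + k 1%nat * k 3%nat * k 12%nat * b * dXTYP k c
    + k 1%nat * k 3%nat * k 15%nat * a * dXDYP k c).
  { unfold Den, N, a, b, dXP, dY, dXTYP, dXT, dXDYP, dXD,
      r1, r2, r3, r4, r5, r6, r7, r8, r9, r10, r11, r12, r13, r14, r15. ring. }
  rewrite eD, eT, eP, eY, e8, e9 in Hid.
  assert (HD : 0 < Den).
  { unfold Den, a, b. assert (0 < k 1%nat * k 3%nat * k 10%nat * k 12%nat) by
      (repeat apply Rmult_lt_0_compat; lra).
    assert (0 < k 2%nat * k 13%nat * k 15%nat * (k 4%nat + k 5%nat) * (k 11%nat + k 12%nat)) by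
      (repeat apply Rmult_lt_0_compat; lra).
    assert (0 < k 1%nat * k 3%nat * k 10%nat * k 12%nat * (k 14%nat + k 15%nat)) by
      (apply Rmult_lt_0_compat; lra).
    lra. }
  assert (H0 : XT c * (YP c * Den - N) = 0) by (replace (XT c * (YP c * Den - N)) with (XT c * YP c * Den - XT c * N) by ring; rewrite Hid; ring).
  apply Rmult_integral in H0. destruct H0 as [H0|H0]; [contradiction|].
  field_simplify_eq; [lra | lra].
Qed.
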